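(* Let $X$, $Y$ be FK-spaces containing $\phi$ and let $Z=X+Y$ with its inductive-limit FK-topology. Then $E(X)+E(Y)\subseteq E(Z)$ for each of $E=D_p^qS,\ D_p^qW,\ D_p^qF,\ D_p^qB$.
   Context: An FK-space is a vector subspace of the space $w$ of all complex sequences with a complete metrizable locally convex topology in which coordinate functionals are continuous; $X'$ is its continuous dual. If $X$, $Y$ have paranorms $\rho$, $s$, then $Z=X+Y$ is an FK-space with paranorm $\tau(z)=\inf\{\rho(x)+s(y): x\in X, y\in Y, x+y=z\}$. $\delta^j$ has $1$ in position $j$, $0$ elsewhere; $\phi=\operatorname{span}\{\delta^j\}$. $p(n)<q(n)$ are nonnegative integer sequences with $q(n)\to\infty$. For $x\in w$, $x^{(k)}=\sum_{j=1}^kx_j\delta^j$ and $T_n(x)=\frac{1}{q(n)-p(n)}\sum_{k=p(n)+1}^{q(n)}x^{(k)}$. For an FK-space $X\supseteq\phi$: $D_p^qS(X)=\{x\in X: T_n(x)\to x\text{ in }X\}$; $D_p^qW(X)=\{x\in X: f(T_n(x))\to f(x)\ \forall f\in X'\}$; $D_p^qF(X)=\{x\in X:\lim_n f(T_n(x))\text{ exists }\forall f\in X'\}$; $D_p^qB(X)=\{x\in X:\sup_n|f(T_n(x))|<\infty\ \forall f\in X'\}$. *)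

(* Defs.v *)
From mathcomp Require Import all_boot all_algebra.
From mathcomp Require Import complex.
From mathcomp Require Import boolp classical_sets reals.
Import GRing.Theory Num.Theory.

Set Implicit Arguments.
Unset Strict Implicit.
Unset Printing Implicit Defensive.

Local Open Scope ring_scope.
Local Open Scope classical_set_scope.
Local Open Scope complex_scope.

Section FK.
Variable R : realType.

(* the space w of all complex sequences; coordinate j (paper, 1-based) is
   index j-1 here *)
Definition wseq := nat -> R[i].

Definition cabs (z : R[i]) : R := Num.sqrt (complex.Re z ^+ 2 + complex.Im z ^+ 2).

Definition w0 : wseq := fun _ => 0.
Definition wadd (x y : wseq) : wseq := fun i => x i + y i.
Definition wopp (x : wseq) : wseq := fun i => - x i.
Definition wsub (x y : wseq) : wseq := fun i => x i - y i.
Definition wscale (c : R[i]) (x : wseq) : wseq := fun i => c * x i.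

Definition tends0 (u : nat -> R) : Prop :=
  forall e : R, 0 < e -> exists N : nat, forall n : nat, (N <= n)%N -> `|u n| < e.

Definition ctends (u : nat -> R[i]) (l : R[i]) : Prop :=
  tends0 (fun n => cabs (u n - l)).

(* phi = span{delta^j} = finitely supported sequences *)
Definition phi : set wseq :=
  [set x | exists N : nat, forall i : nat, (N <= i)%N -> x i = 0].

(* An FK-space: a vector subspace X of w with a total paranorm rho whose
   metric topology d(x,y) = rho(x-y) is complete and locally convex, and in
   which all coordinate functionals are continuous. *)
Definition is_FK (X : set wseq) (rho : wseq -> R) : Prop :=
  [/\
      [/\ X w0,
          (forall x y, X x -> X y -> X (wadd x y)) &
          (forall c x, X x -> X (wscale c x))],
      [/\ rho w0 = 0 /\ (forall x, X x -> 0 <= rho x),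
          (forall x, X x -> rho (wopp x) = rho x),
          (forall x y, X x -> X y -> rho (wadd x y) <= rho x + rho y),
          (forall (t : nat -> R[i]) (t0 : R[i]) (xs : nat -> wseq) (x0 : wseq),
              (forall n, X (xs n)) -> X x0 ->
              ctends t t0 -> tends0 (fun n => rho (wsub (xs n) x0)) ->
              tends0 (fun n => rho (wsub (wscale (t n) (xs n)) (wscale t0 x0))))
          & (forall x, X x -> rho x = 0 -> x = w0)],
      (forall xs : nat -> wseq, (forall n, X (xs n)) ->
          (forall e : R, 0 < e -> exists N : nat, forall m n : nat,
              (N <= m)%N -> (N <= n)%N -> rho (wsub (xs m) (xs n)) < e) ->
          exists2 x, X x & tends0 (fun n => rho (wsub (xs n) x))),
      (* local convexity: 0 has a base of convex neighbourhoods *)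
      (forall e : R, 0 < e -> exists U : set wseq,
          [/\ (forall x y (l : R), U x -> U y -> 0 <= l -> l <= 1 ->
                 U (wadd (wscale l%:C x) (wscale (1 - l)%:C y))),
              (forall x, U x -> X x /\ rho x < e) &
              exists2 d : R, 0 < d & (forall x, X x -> rho x < d -> U x)]) &
      (forall (j : nat) (x0 : wseq), X x0 -> forall e : R, 0 < e ->
          exists2 d : R, 0 < d & forall x, X x -> rho (wsub x x0) < d ->
              cabs (x j - x0 j) < e)].

Definition dual (X : set wseq) (rho : wseq -> R) : set (wseq -> R[i]) :=
  [set f | [/\ (forall x y, X x -> X y -> f (wadd x y) = f x + f y),
               (forall c x, X x -> f (wscale c x) = c * f x) &
               (forall x0, X x0 -> forall e : R, 0 < e ->
                  exists2 d : R, 0 < d & forall x, X x -> rho (wsub x x0) < d ->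
                     cabs (f x - f x0) < e)]].

(* x^(k) = sum_{j=1}^k x_j delta^j  (keeps the first k coordinates) *)
Definition sect (k : nat) (x : wseq) : wseq :=
  fun i => if (i < k)%N then x i else 0.

Definition Tn (p q : nat -> nat) (n : nat) (x : wseq) : wseq :=
  fun i => ((q n - p n)%:R)^-1 * \sum_(p n + 1 <= k < q n + 1) sect k x i.

Definition DS (p q : nat -> nat) (X : set wseq) (rho : wseq -> R) : set wseq :=
  [set x | X x /\ tends0 (fun n => rho (wsub (Tn p q n x) x))].

Definition DW (p q : nat -> nat) (X : set wseq) (rho : wseq -> R) : set wseq :=
  [set x | X x /\ forall f, dual X rho f -> ctends (fun n => f (Tn p q n x)) (f x)].

Definition DF (p q : nat -> nat) (X : set wseq) (rho : wseq -> R) : set wseq :=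
  [set x | X x /\ forall f, dual X rho f ->
             exists l : R[i], ctends (fun n => f (Tn p q n x)) l].

Definition DB (p q : nat -> nat) (X : set wseq) (rho : wseq -> R) : set wseq :=
  [set x | X x /\ forall f, dual X rho f ->
             exists M : R, forall n, cabs (f (Tn p q n x)) <= M].

Definition wsum (A B : set wseq) : set wseq :=
  [set z | exists x y, [/\ A x, B y & z = wadd x y]].

Definition sum_paranorm (X Y : set wseq) (rho s : wseq -> R) (z : wseq) : R :=
  inf [set r : R | exists x y, [/\ X x, Y y, z = wadd x y & r = rho x + s y]].

End FK.

(* Main.v *)
Require Import Defs.
From mathcomp Require Import all_boot all_algebra.
From mathcomp Require Import complex.
From mathcomp Require Import boolp classical_sets reals.
From mathcomp Require Import order.
Import Order.TTheory GRing.Theory Num.Theory.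
Local Open Scope ring_scope.
Local Open Scope classical_set_scope.

Section Helpers.
Variable R : realType.

Lemma cabsE (z : R[i]) : cabs z = complex.Re `|z|.
Proof. by rewrite /cabs normc_def. Qed.
Lemma cabs_ge0 (z : R[i]) : 0 <= cabs z.
Proof. exact: sqrtr_ge0. Qed.
Lemma cabsD (a b : R[i]) : cabs (a + b) <= cabs a + cabs b.
Proof.
have := ler_normD a b; rewrite lecE => /andP[_]; rewrite !cabsE.
by rewrite raddfD.
Qed.

Lemma tends0D (u v : nat -> R) : tends0 u -> tends0 v -> tends0 (fun n => u n + v n).
Proof.
move=> hu hv e e0.
have e2 : 0 < e / 2 by rewrite divr_gt0.
have [N1 h1] := hu _ e2; have [N2 h2] := hv _ e2.
exists (maxn N1 N2) => n hn.
apply: (le_lt_trans (ler_normD _ _)).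
rewrite [e](splitr e) ltrD //.
  by apply: h1; apply: leq_trans hn; apply: leq_maxl.
by apply: h2; apply: leq_trans hn; apply: leq_maxr.
Qed.

Lemma tends0_le (u v : nat -> R) : (forall n, 0 <= u n <= v n) -> tends0 v -> tends0 u.
Proof.
move=> huv hv e e0; have [N h] := hv e e0; exists N => n hn.
have /andP[a b] := huv n.
apply: le_lt_trans (h n hn).
rewrite ger0_norm // (ger0_norm (le_trans a b)) //.
Qed.

Lemma ctendsD (u v : nat -> R[i]) a b : ctends u a -> ctends v b ->
  ctends (fun n => u n + v n) (a + b).
Proof.
move=> hu hv; rewrite /ctends.
apply: (@tends0_le _ (fun n => cabs (u n - a) + cabs (v n - b))); last first.
  exact: tends0D.
move=> n; rewrite cabs_ge0 /=.
have -> : u n + v n - (a + b) = (u n - a) + (v n - b) by rewrite opprD addrACA.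
exact: cabsD.
Qed.

Lemma sect_add k (x y : wseq R) i : sect k (wadd x y) i = sect k x i + sect k y i.
Proof. by rewrite /sect /wadd; case: ifP; rewrite ?addr0. Qed.

Lemma Tn_add p q n (x y : wseq R) : Tn p q n (wadd x y) = wadd (Tn p q n x) (Tn p q n y).
Proof.
apply: funext => i; rewrite /Tn /wadd -mulrDr -big_split /=.
by congr (_ * _); apply: eq_bigr => k _; rewrite sect_add.
Qed.

Lemma Tn_phi p q n (x : wseq R) : phi (Tn p q n x).
Proof.
exists (q n) => i hi; rewrite /Tn big_nat_cond big1 ?mulr0 //.
move=> k /andP[/andP[_ hk] _]; rewrite /sect ifF //.
apply/negbTE; rewrite -leqNgt; rewrite addn1 ltnS in hk.
exact: leq_trans hk hi.
Qed.

Variables (X Y : set (wseq R)) (rho s : wseq R -> R).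
Hypotheses (hX : is_FK X rho) (hY : is_FK Y s).

Lemma FK_sub {A : set (wseq R)} {r : wseq R -> R} : is_FK A r ->
  forall x y, A x -> A y -> A (wsub x y).
Proof.
case=> [[A0 Aadd Asc] _ _ _ _] x y ax ay.
have -> : wsub x y = wadd x (wscale (-1) y).
  by apply: funext => i; rewrite /wsub /wadd /wscale mulN1r.
by apply: Aadd => //; apply: Asc.
Qed.

Lemma FK_0 {A : set (wseq R)} {r : wseq R -> R} : is_FK A r -> A (w0 R) /\ r (w0 R) = 0.
Proof. by case=> [[A0 _ _] [[r0 _] _ _ _ _] _ _ _]. Qed.

Lemma FK_ge0 {A : set (wseq R)} {r : wseq R -> R} : is_FK A r -> forall x, A x -> 0 <= r x.
Proof. by case=> [_ [[_ r0] _ _ _ _] _ _ _]. Qed.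

Lemma FK_add {A : set (wseq R)} {r : wseq R -> R} : is_FK A r -> forall x y, A x -> A y -> A (wadd x y).
Proof. by case=> [[_ h _] _ _ _ _]. Qed.

Let Z := wsum X Y.
Let tau := sum_paranorm X Y rho s.

Lemma tau_le x y : X x -> Y y -> tau (wadd x y) <= rho x + s y.
Proof.
move=> xx yy; rewrite /tau /sum_paranorm.
apply: ge_inf.
  exists 0 => r [a [b [aa bb _ ->]]].
  by apply: addr_ge0; [exact: (FK_ge0 hX) | exact: (FK_ge0 hY)].
by exists x, y.
Qed.

Lemma tau_ge0 z : Z z -> 0 <= tau z.
Proof.
move=> [x [y [xx yy ->]]]; rewrite /tau /sum_paranorm.
apply: lb_le_inf; first by exists (rho x + s y); exists x, y.
move=> r [a [b [aa bb _ ->]]].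
by apply: addr_ge0; [exact: (FK_ge0 hX) | exact: (FK_ge0 hY)].
Qed.

Lemma XZ x : X x -> Z x.
Proof.
move=> xx; exists x, (w0 R); split => //; first by case: (FK_0 hY).
by apply: funext => i; rewrite /wadd /w0 addr0.
Qed.

Lemma YZ y : Y y -> Z y.
Proof.
move=> yy; exists (w0 R), y; split => //; first by case: (FK_0 hX).
by apply: funext => i; rewrite /wadd /w0 add0r.
Qed.

Lemma dualX f : dual Z tau f -> dual X rho f.
Proof.
case=> fa fs fc; split.
- by move=> x y xx yy; apply: fa; apply: XZ.
- by move=> c x xx; apply: fs; apply: XZ.
move=> x0 xx0 e e0; have [d d0 hd] := fc x0 (XZ _ xx0) e e0.
exists d => // x xx hx; apply: hd; first exact: XZ.
have -> : wsub x x0 = wadd (wsub x x0) (w0 R).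
  by apply: funext => i; rewrite /wadd /w0 addr0.
case: (FK_0 hY) => Y0 s0.
apply: le_lt_trans (tau_le (wsub x x0) (w0 R) (FK_sub hX _ _ xx xx0) Y0) _.
by rewrite s0 addr0.
Qed.

Lemma dualY f : dual Z tau f -> dual Y s f.
Proof.
case=> fa fs fc; split.
- by move=> x y xx yy; apply: fa; apply: YZ.
- by move=> c x xx; apply: fs; apply: YZ.
move=> x0 xx0 e e0; have [d d0 hd] := fc x0 (YZ _ xx0) e e0.
exists d => // x xx hx; apply: hd; first exact: YZ.
have -> : wsub x x0 = wadd (w0 R) (wsub x x0).
  by apply: funext => i; rewrite /wadd /w0 add0r.
case: (FK_0 hX) => X0 r0.
apply: le_lt_trans (tau_le (w0 R) (wsub x x0) X0 (FK_sub hY _ _ xx xx0)) _.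
by rewrite r0 add0r.
Qed.

End Helpers.
Arguments XZ {R X Y s}.
Arguments YZ {R X Y rho}.
Arguments dualX {R X Y rho s}.
Arguments dualY {R X Y rho s}.
Arguments tau_le {R X Y rho s}.
Arguments tau_ge0 {R X Y rho s}.
Arguments tends0_le {R}.
Arguments cabsD {R}.
Arguments FK_sub {R A r}.
Arguments FK_0 {R A r}.
Arguments FK_ge0 {R A r}.
Arguments FK_add {R A r}.
Arguments Tn_add {R}.
Arguments Tn_phi {R}.

Theorem mainTheorem17 (R : realType) (p q : nat -> nat)
    (hpq : forall n, (p n < q n)%N)
    (hq : forall M : nat, exists N : nat, forall n, (N <= n)%N -> (M <= q n)%N)
    (X Y : set (wseq R)) (rho s : wseq R -> R)
    (hX : is_FK X rho) (hY : is_FK Y s)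
    (hphiX : @phi R `<=` X) (hphiY : @phi R `<=` Y) :
  let Z := wsum X Y in
  let tau := sum_paranorm X Y rho s in
  [/\ wsum (DS p q X rho) (DS p q Y s) `<=` DS p q Z tau,
      wsum (DW p q X rho) (DW p q Y s) `<=` DW p q Z tau,
      wsum (DF p q X rho) (DF p q Y s) `<=` DF p q Z tau &
      wsum (DB p q X rho) (DB p q Y s) `<=` DB p q Z tau].
Proof.
move=> Z tau.
have TX : forall n x, X (Tn p q n x) by move=> n x; apply: hphiX; apply: Tn_phi.
have TY : forall n y, Y (Tn p q n y) by move=> n y; apply: hphiY; apply: Tn_phi.
have Zxy : forall x y, X x -> Y y -> Z (wadd x y) by move=> x y xx yy; exists x, y.
have fTn : forall f, dual Z tau f -> forall n x y, X x -> Y y ->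
    f (Tn p q n (wadd x y)) = f (Tn p q n x) + f (Tn p q n y).
  move=> f [fa _ _] n x y xx yy; rewrite Tn_add; apply: fa.
    exact: (XZ hY).
  exact: (YZ hX).
have fz : forall f, dual Z tau f -> forall x y, X x -> Y y ->
    f (wadd x y) = f x + f y.
  move=> f [fa _ _] x y xx yy; apply: fa; [exact: (XZ hY) | exact: (YZ hX)].
split.
- move=> _ [x [y [[xx tx] [yy ty] ->]]]; split; first exact: Zxy.
  apply: (@tends0_le _ _ (fun n => rho (wsub (Tn p q n x) x) + s (wsub (Tn p q n y) y))); last first.
    exact: tends0D.
  move=> n.
  have -> : wsub (Tn p q n (wadd x y)) (wadd x y) =
     wadd (wsub (Tn p q n x) x) (wsub (Tn p q n y) y).
    by rewrite Tn_add; apply: funext => i; rewrite /wsub /wadd opprD addrACA.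
  have a1 : X (wsub (Tn p q n x) x) by apply: (FK_sub hX).
  have a2 : Y (wsub (Tn p q n y) y) by apply: (FK_sub hY).
  rewrite (tau_ge0 hX hY _ (Zxy _ _ a1 a2)) /=.
  exact: tau_le.
- move=> _ [x [y [[xx tx] [yy ty] ->]]]; split; first exact: Zxy.
  move=> f hf.
  rewrite (fz f hf) //.
  have -> : (fun n => f (Tn p q n (wadd x y))) = (fun n => f (Tn p q n x) + f (Tn p q n y)).
    by apply: funext => n; apply: fTn.
  apply: ctendsD; [apply: tx | apply: ty]; [exact: (dualX hX hY) | exact: (dualY hX hY)].
- move=> _ [x [y [[xx tx] [yy ty] ->]]]; split; first exact: Zxy.
  move=> f hf.
  have [l1 h1] := tx f (dualX hX hY _ hf).
  have [l2 h2] := ty f (dualY hX hY _ hf).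
  exists (l1 + l2).
  have -> : (fun n => f (Tn p q n (wadd x y))) = (fun n => f (Tn p q n x) + f (Tn p q n y)).
    by apply: funext => n; apply: fTn.
  exact: ctendsD.
- move=> _ [x [y [[xx tx] [yy ty] ->]]]; split; first exact: Zxy.
  move=> f hf.
  have [M1 h1] := tx f (dualX hX hY _ hf).
  have [M2 h2] := ty f (dualY hX hY _ hf).
  exists (M1 + M2) => n; rewrite fTn //.
  apply: le_trans (cabsD _ _) _.
  exact: lerD.
Qed.
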